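(* Let $\tilde d\in C^1(\mathbb{R})$ satisfy $\tilde d(0)=0$, $\tilde d'(m)>d_0$ and $|\tilde d'(m)|\le d_1+d_2|m|^p$ for all $m\in\mathbb{R}$, for some constants $d_0>0$ and $d_1,d_2,p\ge 0$. Then for any $\tilde f,\tilde g\in L^2(0,1)$ and $\tilde h=(\tilde h(0),\tilde h(1))\in\mathbb{R}^2$ the stationary system $$\partial_x\tilde m(x)=\tilde f(x),\quad \partial_x\tilde p(x)+\tilde d(\tilde m(x))=\tilde g(x)\quad (x\in(0,1)),\qquad \tilde p(x)=\tilde h(x)\quad (x\in\{0,1\})$$ has a unique solution $(\tilde p,\tilde m)\in H^1(0,1)\times H^1(0,1)$, and there exists a constant $c>0$, independent of $\tilde d$ and of $\tilde f,\tilde g,\tilde h$, such that $$\|\tilde m\|_{H^1}\le \frac{c}{d_0}\big(\|\tilde g\|_{L^2}+|\tilde h|_1+d_1\|\tilde f\|_{L^2}+d_2\|\tilde f\|_{L^2}^{p+1}\big)+c\|\tilde f\|_{L^2}=:M,$$ $$\|\tilde p\|_{H^1}\le c\big(\|\tilde g\|_{L^2}+|\tilde h|_1+d_1M+d_2M^{p+1}\big).$$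
   Context: $|\tilde h|_1=|\tilde h(0)|+|\tilde h(1)|$ denotes the $\ell^1$-norm on $\mathbb{R}^2$. $L^2$ and $H^1$ denote the usual Lebesgue and Sobolev spaces on $(0,1)$. *)

(* Defs.v *)
From HB Require Import structures.
From mathcomp Require Import all_boot all_order all_algebra.
From mathcomp Require Import all_classical all_reals all_analysis.
Set Implicit Arguments. Unset Strict Implicit. Unset Printing Implicit Defensive.
Import Order.TTheory GRing.Theory Num.Theory.
Import numFieldNormedType.Exports.
Local Open Scope classical_set_scope.
Local Open Scope ring_scope.

Section Defs.
Variable R : realType.

Definition I01 : set R := `[0, 1]%classic.

Definition inL2 (f : R -> R) : Prop :=
  measurable_fun I01 f /\
  (\int[@lebesgue_measure R]_(x in I01) ((f x) ^+ 2)%:E < +oo)%E.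

Definition L2norm (f : R -> R) : R :=
  Num.sqrt (fine (\int[@lebesgue_measure R]_(x in I01) ((f x) ^+ 2)%:E)).

(* u is an H^1(0,1) function with (weak) derivative du: du is in L^2(0,1)
   and u is (on [0,1]) the absolutely continuous representative
   u(x) = u(0) + \int_0^x du. *)
Definition isH1 (u du : R -> R) : Prop :=
  inL2 du /\
  forall x, 0 <= x <= 1 ->
    u x = u 0 + Rintegral (@lebesgue_measure R) `[0, x]%classic du.

Definition H1norm (u du : R -> R) : R :=
  Num.sqrt (L2norm u ^+ 2 + L2norm du ^+ 2).

Definition solves (d f g : R -> R) (h0 h1 : R) (p dp m dm : R -> R) : Prop :=
  isH1 p dp /\ isH1 m dm /\
  {ae @lebesgue_measure R, forall x, 0 < x < 1 -> dm x = f x} /\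
  {ae @lebesgue_measure R, forall x, 0 < x < 1 -> dp x + d (m x) = g x} /\
  p 0 = h0 /\ p 1 = h1.

End Defs.

(* Main.v *)
Require Import Defs.
From HB Require Import structures.
From mathcomp Require Import all_boot all_order all_algebra.
From mathcomp Require Import all_classical all_reals all_analysis.
From mathcomp Require Import ring lra.
From mathcomp Require Import measurable_realfun.
Import Order.TTheory GRing.Theory Num.Theory.
Import numFieldNormedType.Exports.
Local Open Scope classical_set_scope.
Local Open Scope ring_scope.
Set Implicit Arguments. Unset Strict Implicit. Unset Printing Implicit Defensive.
Section L2facts.
Context {R : realType}.
Local Notation mu := (@lebesgue_measure R).

Lemma mI01 : measurable (I01 (R:=R)).
Proof. exact: measurable_itv. Qed.

Lemma mI01L : measurable (I01 (R:=R) : set (g_sigma_algebraType R.-ocitv.-measurable)).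
Proof. exact: mI01. Qed.

Lemma muI01 : mu (I01 (R:=R)) = 1%E.
Proof. by rewrite /I01 lebesgue_measure_itv/= lte01 sube0. Qed.

Lemma abs_le_sq1 (y : R) : `|y| <= y ^+ 2 + 1.
Proof.
rewrite -real_normK ?num_real//.
have := sqr_ge0 (`|y| - 1).
have := normr_ge0 y. nra.
Qed.

Lemma int_sq_ge0 (u : R -> R) : 0 <= \int[mu]_(x in I01 (R:=R)) (u x ^+ 2).
Proof. by apply: Rintegral_ge0 => x _; exact: sqr_ge0. Qed.

Lemma L2_sq_int (u : R -> R) : inL2 u ->
  mu.-integrable (I01 (R:=R)) (EFin \o (fun x => u x ^+ 2)).
Proof.
case=> mu_ fin; apply/integrableP; split.
  by apply/measurable_EFinP; exact: measurable_funX.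
apply: le_lt_trans fin; rewrite le_eqVlt; apply/orP; left; apply/eqP.
by apply: eq_integral => x _ /=; rewrite ger0_norm// sqr_ge0.
Qed.

Lemma inL2_of (u : R -> R) : measurable_fun (I01 (R:=R)) u ->
  mu.-integrable (I01 (R:=R)) (EFin \o (fun x => u x ^+ 2)) -> inL2 u.
Proof.
move=> mu_ /integrableP[_ fin]; split => //.
apply: le_lt_trans fin; rewrite le_eqVlt; apply/orP; left; apply/eqP.
by apply: eq_integral => x _ /=; rewrite ger0_norm// sqr_ge0.
Qed.

Lemma cst_int (K : R) : mu.-integrable (I01 (R:=R)) (EFin \o (fun _ => K)).
Proof.
apply/integrableP; split; first exact/measurable_EFinP/measurable_cst.
rewrite (eq_integral (fun x => (cst `|K|%:E) x)); last by [].
rewrite integral_cst; last exact: measurable_itv.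
have := muI01; move=> /= ->; by rewrite mule1 ltry.
Qed.

Lemma L2_integrable (f : R -> R) : inL2 f -> mu.-integrable (I01 (R:=R)) (EFin \o f).
Proof.
move=> hf; have [mf _] := hf.
have i2 := L2_sq_int hf.
have i3 : mu.-integrable (I01 (R:=R)) (EFin \o (fun x => f x ^+ 2 + 1)).
  apply: (eq_integrable _ _ _ _ (integrableD _ i2 (cst_int 1))) => //.
  all: try exact: mI01.
apply: le_integrable i3 => //.
  exact: mI01.
  exact: (measurable_EFinP _ _).2 mf.
move=> x _ /=; rewrite lee_fin (ger0_norm (_ : 0 <= f x ^+ 2 + 1)).
  exact: abs_le_sq1.
by rewrite addr_ge0// sqr_ge0.
Qed.

Lemma bdd_integrable (u : R -> R) (K : R) : measurable_fun (I01 (R:=R)) u ->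
  (forall x, I01 (R:=R) x -> `|u x| <= K) -> mu.-integrable (I01 (R:=R)) (EFin \o u).
Proof.
move=> mu_ uK; apply: le_integrable (cst_int K) => //.
  exact: mI01.
  exact: (measurable_EFinP _ _).2 mu_.
move=> x Ix /=; rewrite lee_fin (le_trans (uK x Ix))//.
exact: ler_norm.
Qed.

End L2facts.
Section L2more.
Context {R : realType}.
Local Notation mu := (@lebesgue_measure R).

Lemma L2norm_ge0 (u : R -> R) : 0 <= L2norm u.
Proof. exact: sqrtr_ge0. Qed.

Lemma Rint_cst01 (K : R) : \int[mu]_(x in I01 (R:=R)) K = K.
Proof.
rewrite Rintegral_cst; last exact: mI01.
by have := muI01; move=> /= ->; rewrite mulr1.
Qed.

Lemma L2_bdd (u : R -> R) (K : R) : measurable_fun (I01 (R:=R)) u -> 0 <= K ->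
  (forall x, I01 (R:=R) x -> `|u x| <= K) -> inL2 u /\ L2norm u <= K.
Proof.
move=> mu_ K0 uK.
have mu2 : measurable_fun (I01 (R:=R)) (fun x => u x ^+ 2) := measurable_funX 2 mu_.
have b2 : forall x, I01 (R:=R) x -> `|u x ^+ 2| <= K ^+ 2.
  move=> x Ix; have h := uK x Ix; have := normr_ge0 (u x).
  rewrite normrX; nra.
have i2 := bdd_integrable mu2 b2.
split; first exact: inL2_of mu_ i2.
rewrite /L2norm -(ger0_norm K0) -sqrtr_sqr ler_wsqrtr//.
rewrite -[X in _ <= X](Rint_cst01 (K ^+ 2)).
apply: le_Rintegral => //; first exact: mI01.
  exact: cst_int.
move=> x Ix; have := b2 x Ix; rewrite ger0_norm// sqr_ge0//.
Qed.

Lemma abs_int (f : R -> R) : inL2 f ->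
  mu.-integrable (I01 (R:=R)) (EFin \o (fun x => `|f x|)).
Proof. by move=> hf; exact: integrable_norm (L2_integrable hf). Qed.

Lemma CS (f : R -> R) : inL2 f -> \int[mu]_(x in I01 (R:=R)) `|f x| <= L2norm f.
Proof.
move=> hf; apply/ler_addgt0Pr => e e0.
set L := L2norm f; set s := L + e; set I := \int[mu]_(x in I01 (R:=R)) `|f x|.
have L0 : 0 <= L := L2norm_ge0 f.
have s0 : 0 < s by rewrite /s; lra.
have QL : \int[mu]_(x in I01 (R:=R)) (f x ^+ 2) = L ^+ 2.
  by rewrite /L /L2norm sqr_sqrtr// int_sq_ge0.
have H : 2 * s * I <= L ^+ 2 + s ^+ 2.
  rewrite /I -RintegralZl; last exact: abs_int; last exact: mI01.
  rewrite -QL -[X in _ + X](Rint_cst01 (s ^+ 2)) -RintegralD; last first.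
  - exact: cst_int.
  - exact: L2_sq_int.
  - exact: mI01.
  apply: le_Rintegral => //; first exact: mI01.
  + by have := integrableZl _ (2 * s) (abs_int hf); apply => //; exact: mI01.
  + by have := integrableD _ (L2_sq_int hf) (cst_int (s ^+ 2)); apply => //; exact: mI01.
  move=> x _; have := sqr_ge0 (`|f x| - s).
  rewrite -[f x ^+ 2]real_normK ?num_real//; nra.
have Ls : L * L <= s * s by rewrite /s; nra.
rewrite !expr2 in H.
have h2 : (2 * s) * I <= (2 * s) * s by nra.
by rewrite ler_pM2l ?mulr_gt0// in h2.
Qed.

End L2more.
Section L2more2.
Context {R : realType}.
Local Notation mu := (@lebesgue_measure R).

Lemma sub0x (x : R) : 0 <= x <= 1 -> `[0, x]%classic `<=` I01 (R:=R).
Proof.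
move=> /andP[x0 x1] y; rewrite /I01 /= !in_itv /= => /andP[h1 h2].
by rewrite h1 /=; exact: le_trans h2 x1.
Qed.

Lemma bound_int (f : R -> R) (x : R) : inL2 f -> 0 <= x <= 1 ->
  `|\int[mu]_(y in `[0, x]%classic) f y| <= L2norm f.
Proof.
move=> hf hx.
have sx := sub0x hx.
have mx : measurable (`[0, x]%classic : set R) by exact: measurable_itv.
have ix : mu.-integrable `[0, x]%classic (EFin \o f).
  by apply: integrableS (L2_integrable hf) => //; exact: mI01.
apply: le_trans (le_normr_Rintegral _ ix) _ => //.
apply: le_trans (CS hf).
have ia := abs_int hf.
have ib : mu.-integrable `[0, x]%classic (EFin \o (fun y => `|f y|)).
  by apply: integrableS ia => //; exact: mI01.
apply: fine_le.
- by apply: (integrable_fin_num _ ib); exact: measurable_itv.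
- by apply: (integrable_fin_num _ ia); exact: mI01.
apply: ge0_subset_integral => //; first exact: mI01.
by case/integrableP: ia.
Qed.

Lemma H1_le (u du : R -> R) : H1norm u du <= L2norm u + L2norm du.
Proof.
have a0 := L2norm_ge0 u; have b0 := L2norm_ge0 du.
rewrite /H1norm -(ger0_norm (addr_ge0 a0 b0)) -sqrtr_sqr ler_wsqrtr//.
nra.
Qed.

Lemma L2_sub (u v : R -> R) : inL2 u -> inL2 v ->
  inL2 (fun x => u x - v x) /\
  L2norm (fun x => u x - v x) <= 2 * (L2norm u + L2norm v).
Proof.
move=> hu hv.
have [mu_ _] := hu; have [mv _] := hv.
have mw : measurable_fun (I01 (R:=R)) (fun x => u x - v x) := measurable_funB mu_ mv.
have iu := L2_sq_int hu; have iv := L2_sq_int hv.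
have i2 : mu.-integrable (I01 (R:=R)) (EFin \o (fun x => 2 * u x ^+ 2 + 2 * v x ^+ 2)).
  apply: (eq_integrable _ _ _ _ (integrableD _ (integrableZl _ 2 iu) (integrableZl _ 2 iv))).
  all: try exact: mI01.
  by move=> x _ /=.
have pw : forall x, (u x - v x) ^+ 2 <= 2 * u x ^+ 2 + 2 * v x ^+ 2.
  move=> x; have := sqr_ge0 (u x + v x); nra.
have iw : mu.-integrable (I01 (R:=R)) (EFin \o (fun x => (u x - v x) ^+ 2)).
  apply: le_integrable i2 => //; first exact: mI01.
    exact: (measurable_EFinP _ _).2 (measurable_funX 2 mw).
  move=> x _ /=; rewrite lee_fin !ger0_norm ?sqr_ge0// ?pw//.
  by rewrite addr_ge0// mulr_ge0// sqr_ge0.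
split; first exact: inL2_of mw iw.
have Q : \int[mu]_(x in I01 (R:=R)) ((u x - v x) ^+ 2) <=
         2 * L2norm u ^+ 2 + 2 * L2norm v ^+ 2.
  rewrite /L2norm !sqr_sqrtr ?int_sq_ge0//.
  rewrite -(RintegralZl 2 mI01L iu) -(RintegralZl 2 mI01L iv).
  rewrite -(RintegralD mI01L (integrableZl mI01L 2 iu) (integrableZl mI01L 2 iv)).
  by apply: le_Rintegral => //; exact: mI01.
have a0 := L2norm_ge0 u; have b0 := L2norm_ge0 v.
rewrite /L2norm -/(L2norm u) -/(L2norm v).
rewrite -(ger0_norm (_ : 0 <= 2 * (L2norm u + L2norm v))); last by nra.
rewrite -sqrtr_sqr ler_wsqrtr//; apply: le_trans Q _; nra.
Qed.

End L2more2.
Section Dfacts.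
Context {R : realType}.
Variables (d : R -> R) (d0 d1 d2 p : R).
Hypothesis p0 : 0 <= p.
Hypothesis d1_0 : 0 <= d1.
Hypothesis d2_0 : 0 <= d2.
Hypothesis dd : forall x, derivable d x 1.
Hypothesis d_0 : d 0 = 0.
Hypothesis dlow : forall y, d0 < derive1 d y.
Hypothesis dup : forall y, `|derive1 d y| <= d1 + d2 * powR `|y| p.

Lemma d_cont : continuous d.
Proof.
move=> x; apply: differentiable_continuous.
exact/derivable1_diffP.
Qed.

Lemma d_mvt a b : a <= b -> exists c, a <= c <= b /\ d b - d a = derive1 d c * (b - a).
Proof.
rewrite le_eqVlt => /predU1P[<-|ab].
  by exists a; rewrite lexx !subrr mulr0.
have hd : forall x, x \in `]a, b[ -> is_derive x 1 d (derive1 d x).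
  by move=> x _; rewrite derive1E; exact: derivableP.
have [c cab ->] := MVT ab hd (continuous_subspaceT d_cont).
exists c; split => //; rewrite in_itv /= in cab.
by case/andP: cab => h1 h2; rewrite ltW // ltW.
Qed.

Lemma d_mono a b : a <= b -> d0 * (b - a) <= d b - d a.
Proof.
move=> ab; have [c [_ ->]] := d_mvt ab.
by apply: ler_wpM2r; [rewrite subr_ge0|exact: ltW].
Qed.

Lemma d_lip (K a b : R) : `|a| <= K -> `|b| <= K ->
  `|d b - d a| <= (d1 + d2 * powR K p) * `|b - a|.
Proof.
wlog ab : a b / a <= b.
  move=> H ha hb; have [ab|ba] := leP a b; first exact: H.
  by rewrite -normrN opprB -(normrN (b - a)) opprB; apply: H => //; exact: ltW.
move=> ha hb; have [c [/andP[ac cb] ->]] := d_mvt ab.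
rewrite normrM; apply: ler_wpM2r => //.
apply: le_trans (dup c) _; apply: lerD => //; apply: ler_wpM2l => //.
have cK : `|c| <= K.
  rewrite ler_norml; apply/andP; split.
  - by move: ha; rewrite ler_norml => /andP[h _]; exact: le_trans h ac.
  - by move: hb; rewrite ler_norml => /andP[_ h]; exact: le_trans cb h.
apply: ge0_ler_powR => //; rewrite ?nnegrE//.
exact: le_trans (normr_ge0 _) cK.
Qed.

Lemma d_bound s : `|d s| <= (d1 + d2 * powR `|s| p) * `|s|.
Proof.
have := @d_lip `|s| 0 s; by rewrite d_0 !subr0 normr0 => ->//.
Qed.

End Dfacts.
Section Pint.
Context {R : realType}.
Local Notation mu := (@lebesgue_measure R).

Lemma pint_cont (u : R -> R) : mu.-integrable (I01 (R:=R)) (EFin \o u) ->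
  {within I01 (R:=R), continuous (fun x => \int[mu]_(y in `[0, x]%classic) u y)}.
Proof.
move=> iu.
exact: (@parameterized_integral_continuous R 0 1 u ler01 iu).
Qed.

Lemma pint_meas (u : R -> R) : mu.-integrable (I01 (R:=R)) (EFin \o u) ->
  measurable_fun (I01 (R:=R)) (fun x => \int[mu]_(y in `[0, x]%classic) u y).
Proof.
move=> iu; apply: subspace_continuous_measurable_fun; first exact: mI01.
exact: pint_cont.
Qed.

Lemma pint0 (u : R -> R) : \int[mu]_(y in `[0, 0]%classic) u y = 0.
Proof. by rewrite set_itv1 Rintegral_set1. Qed.

End Pint.
Section AE.
Context {R : realType}.
Local Notation mu := (@lebesgue_measure R).

Lemma ae_int (u v : R -> R) (x : R) :
  mu.-integrable (I01 (R:=R)) (EFin \o u) -> mu.-integrable (I01 (R:=R)) (EFin \o v) ->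
  {ae mu, forall y, 0 < y < 1 -> u y = v y} -> 0 <= x <= 1 ->
  \int[mu]_(y in `[0, x]%classic) u y = \int[mu]_(y in `[0, x]%classic) v y.
Proof.
move=> iu iv hae hx.
have sx := sub0x hx.
have [x0|x0] := eqVneq x 0; first by rewrite x0 !pint0.
have xpos : 0 < x by case/andP: hx => h _; rewrite lt_def x0 h.
have sub1 : `]0, x]%classic `<=` I01 (R:=R).
  by move=> y /= /[!in_itv] /= /andP[h1 h2]; apply: sx; rewrite /= in_itv /= (ltW h1).
have sub2 : `]0, x[%classic `<=` I01 (R:=R).
  by move=> y /= /[!in_itv] /= /andP[h1 h2]; apply: sx; rewrite /= in_itv /= (ltW h1) (ltW h2).
have key : forall w : R -> R, mu.-integrable (I01 (R:=R)) (EFin \o w) ->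
    \int[mu]_(y in `[0, x]%classic) w y = \int[mu]_(y in `]0, x[%classic) w y.
  move=> w iw.
  rewrite -(@Rintegral_itv_obnd_cbnd R 0 (BRight x) w); last first.
    by apply: integrableS iw => //; exact: mI01.
  rewrite -(@Rintegral_itv_bndo_bndc R (BRight 0) x w) //.
  by apply: integrableS iw => //; exact: mI01.
rewrite (key u iu) (key v iv).
congr fine; apply: ae_eq_integral => //.
- by apply: measurable_funS (measurable_int _ iu) => //; exact: mI01.
- by apply: measurable_funS (measurable_int _ iv) => //; exact: mI01.
- have HF := @ae_filter_ringOfSetsType _ _ _ mu.
  apply: (@filterS _ _ HF _ _ _ hae) => y H /=; rewrite in_itv /= => /andP[h1 h2].
  rewrite H // h1 /=; apply: lt_le_trans h2 _.
  by case/andP: hx.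
Qed.

Lemma intB (u v : R -> R) : mu.-integrable (I01 (R:=R)) (EFin \o u) ->
  mu.-integrable (I01 (R:=R)) (EFin \o v) ->
  mu.-integrable (I01 (R:=R)) (EFin \o (fun x => u x - v x)).
Proof.
move=> iu iv.
apply: (eq_integrable _ _ _ _ (integrableB _ iu iv)); try exact: mI01.
by move=> x _ /=; rewrite EFinB.
Qed.

Lemma intD (u v : R -> R) : mu.-integrable (I01 (R:=R)) (EFin \o u) ->
  mu.-integrable (I01 (R:=R)) (EFin \o v) ->
  mu.-integrable (I01 (R:=R)) (EFin \o (fun x => u x + v x)).
Proof.
move=> iu iv.
apply: (eq_integrable _ _ _ _ (integrableD _ iu iv)); try exact: mI01.
by move=> x _ /=; rewrite EFinD.
Qed.

End AE.
Section Main.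
Context {R : realType}.
Local Notation mu := (@lebesgue_measure R).
Variables (d : R -> R) (d0 d1 d2 p : R).
Hypothesis d0_pos : 0 < d0.
Hypothesis d1_0 : 0 <= d1.
Hypothesis d2_0 : 0 <= d2.
Hypothesis p0 : 0 <= p.
Hypothesis dd : forall x, derivable d x 1.
Hypothesis d_0 : d 0 = 0.
Hypothesis dlow : forall y, d0 < derive1 d y.
Hypothesis dup : forall y, `|derive1 d y| <= d1 + d2 * powR `|y| p.
Variables (f g : R -> R) (h0 h1 : R).
Hypothesis hf : inL2 f.
Hypothesis hg : inL2 g.

Let F x := \int[mu]_(y in `[0, x]%classic) f y.
Let Lf := L2norm f.
Let Lg := L2norm g.

Let Lf0 : 0 <= Lf. Proof. exact: L2norm_ge0. Qed.
Let Lg0 : 0 <= Lg. Proof. exact: L2norm_ge0. Qed.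

Let FLf y : I01 (R:=R) y -> `|F y| <= Lf.
Proof.
move=> Iy; apply: bound_int => //.

Qed.

Let Fmeas : measurable_fun (I01 (R:=R)) F.
Proof. exact: pint_meas (L2_integrable hf). Qed.

Let F0 : F 0 = 0.
Proof. exact: pint0. Qed.

Let dbF_meas b : measurable_fun (I01 (R:=R)) (fun y => d (b + F y)).
Proof.
apply: (measurableT_comp (f := d) (g := fun y => b + F y)).
  exact: continuous_measurable_fun (d_cont dd).
exact: measurable_funD (measurable_cst b) Fmeas.
Qed.

Let Cb (b : R) := (d1 + d2 * powR (`|b| + Lf) p) * (`|b| + Lf).

Let dbF_bdd b y : I01 (R:=R) y -> `|d (b + F y)| <= Cb b.
Proof.
move=> Iy; have hK : `|b + F y| <= `|b| + Lf.
  by apply: le_trans (ler_normD _ _) _; rewrite lerD2l FLf.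
have h0' : `|0:R| <= `|b| + Lf by rewrite normr0 addr_ge0.
have H := d_lip p0 d2_0 dd dup h0' hK; rewrite d_0 !subr0 in H.
apply: le_trans H _; apply: ler_wpM2l => //.
by rewrite addr_ge0// mulr_ge0// powR_ge0.
Qed.

Let Cb0 b : 0 <= Cb b.
Proof. by rewrite /Cb mulr_ge0// ?addr_ge0// mulr_ge0// powR_ge0. Qed.

Let dbF_int b : mu.-integrable (I01 (R:=R)) (EFin \o (fun y => d (b + F y))).
Proof. exact: bdd_integrable (dbF_meas b) (dbF_bdd b). Qed.

Let dbF_L2 b : inL2 (fun y => d (b + F y)).
Proof. exact: (L2_bdd (dbF_meas b) (Cb0 b) (dbF_bdd b)).1. Qed.

Let Phi b := \int[mu]_(y in I01 (R:=R)) d (b + F y).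

Let Phi_mono a b : a <= b -> d0 * (b - a) <= Phi b - Phi a.
Proof.
move=> ab; rewrite /Phi -(RintegralB mI01L (dbF_int b) (dbF_int a)).
rewrite -[X in X <= _]Rint_cst01.
apply: le_Rintegral => //; first exact: mI01.
  exact: cst_int.
  exact: intB.
move=> y _; have := d_mono dd dlow (a:=a + F y) (b:=b + F y).
by rewrite lerD2r => /(_ ab); rewrite opprD addrACA subrr addr0.
Qed.

Let Phi_lip K a b : `|a| <= K -> `|b| <= K ->
  `|Phi b - Phi a| <= (d1 + d2 * powR (K + Lf) p) * `|b - a|.
Proof.
move=> ha hb.
have iB : mu.-integrable (I01 (R:=R)) (EFin \o (fun y => d (b + F y) - d (a + F y))).
  exact: intB.
rewrite /Phi -(RintegralB mI01L (dbF_int b) (dbF_int a)).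
apply: le_trans (le_normr_Rintegral _ iB) _; first exact: mI01.
rewrite -[X in _ <= X]Rint_cst01.
apply: le_Rintegral => //; first exact: mI01.
  by apply: integrable_norm.
  exact: cst_int.
move=> y Iy.
have hK : forall c, `|c| <= K -> `|c + F y| <= K + Lf.
  by move=> c hc; apply: le_trans (ler_normD _ _) _; apply: lerD => //; exact: FLf.
have := d_lip p0 d2_0 dd dup (hK _ ha) (hK _ hb).
by rewrite opprD addrACA subrr addr0.
Qed.

Let Phi_cont : continuous Phi.
Proof.
move=> x; apply/cvgrPdist_le => /= e e0.
set L := d1 + d2 * powR (`|x| + 1 + Lf) p.
have L0 : 0 <= L by rewrite /L addr_ge0// mulr_ge0// powR_ge0.
apply/nbhs_ballP; exists (Num.min 1 (e / (L + 1))).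
  by rewrite /= lt_min ltr01 divr_gt0//; lra.
move=> t; rewrite /ball /= lt_min => /andP[t1 te].
have hx : `|x| <= `|x| + 1 by lra.
have ht : `|t| <= `|x| + 1.
  have := ler_normD x (t - x); rewrite addrC subrK.
  by rewrite -normrN opprB in t1; lra.
have := Phi_lip hx ht; rewrite -/L => H.
rewrite -normrN opprB; apply: le_trans H _.
rewrite -normrN opprB.
have : `|x - t| * (L + 1) <= e.
  by rewrite -ler_pdivlMr; [exact: ltW|lra].
have := normr_ge0 (x - t); nra.
Qed.

Let T := h0 - h1 + \int[mu]_(y in I01 (R:=R)) g y.
Let A := Lg + (`|h0| + `|h1|) + d1 * Lf + d2 * powR Lf (p + 1).

Let powR_p1 x : 0 <= x -> powR x p * x = powR x (p + 1).
Proof.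
move=> x0; rewrite powRD ?powRr1//.
have hp : 0 < p + 1 by rewrite (lt_le_trans ltr01)// lerDr.
have -> : (p + 1 == 0) = false by rewrite gt_eqF.
done.
Qed.

Let Phi0_bound : `|Phi 0| <= d1 * Lf + d2 * powR Lf (p + 1).
Proof.
rewrite /Phi.
apply: le_trans (le_normr_Rintegral _ (dbF_int 0)) _; first exact: mI01.
rewrite -[X in _ <= X](Rint_cst01).
apply: le_Rintegral => //; first exact: mI01.
  exact: integrable_norm.
  exact: cst_int.
move=> y Iy; apply: le_trans (dbF_bdd 0 Iy) _.
rewrite /Cb normr0 add0r -powR_p1//; lra.
Qed.

Let T_bound : `|T - Phi 0| <= A.
Proof.
have ig := L2_integrable hg.
have Hg : `|\int[mu]_(y in I01 (R:=R)) g y| <= Lg.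
  apply: le_trans (le_normr_Rintegral _ ig) _; first exact: mI01.
  exact: CS.
have P0 := Phi0_bound; rewrite /T /A.
have n1 := ler_normD (h0 - h1 + \int[mu]_(y in I01 (R:=R)) g y) (- Phi 0).
have n2 := ler_normD (h0 - h1) (\int[mu]_(y in I01 (R:=R)) g y).
have n3 := ler_normD h0 (- h1).
rewrite !normrN in n1 n3.
move: P0 n1 n2 n3 Hg.
set I := \int[mu]_(y in I01 (R:=R)) g y.
set P := Phi 0.
clearbody I P.
move=> P0 n1 n2 n3 Hg.
lra.
Qed.

Let A0 : 0 <= A.
Proof. by rewrite /A !addr_ge0// ?mulr_ge0// powR_ge0. Qed.

Let exists_a : exists a, Phi a = T /\ `|a| <= A / d0.
Proof.
set K := `|T - Phi 0| / d0.
have K0 : 0 <= K by rewrite /K divr_ge0// ltW.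
have dK : d0 * K = `|T - Phi 0| by rewrite /K mulrC -mulrA mulVf ?mulr1// gt_eqF.
have h1K := Phi_mono K0; rewrite subr0 dK in h1K.
have nK : - K <= 0 by rewrite oppr_le0.
have h2K := Phi_mono nK; rewrite sub0r opprK dK in h2K.
have hn1 := ler_norm (T - Phi 0).
have hn2 := ler_norm (Phi 0 - T); rewrite -normrN opprB in hn2.
have PK : Phi (- K) <= T <= Phi K.
  move: h1K h2K hn1 hn2; set a1 := Phi (- K); set a2 := Phi K; set a0 := Phi 0.
  set nn := `|T - a0|; clearbody a1 a2 a0 nn; set t := T; clearbody t.
  move=> *; apply/andP; split; lra.
have mK : - K <= K by lra.
have PK' : Num.min (Phi (- K)) (Phi K) <= T <= Num.max (Phi (- K)) (Phi K).
  case/andP: PK => Pl Pr.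
  by rewrite ge_min le_max Pl Pr orbT.
have [c cK Pc] := IVT mK (continuous_subspaceT Phi_cont) PK'.
exists c; split => //.
apply: le_trans (_ : K <= _).
  by move: cK; rewrite in_itv /= => /andP[h h']; rewrite ler_norml h h'.
by apply: ler_wpM2r; [rewrite invr_ge0 ltW|exact: T_bound].
Qed.

Lemma main_sol : exists (pt dpt mt dmt : R -> R),
  [/\ solves d f g h0 h1 pt dpt mt dmt,
    (forall pt' dpt' mt' dmt', solves d f g h0 h1 pt' dpt' mt' dmt' ->
       forall x, 0 <= x <= 1 -> pt' x = pt x /\ mt' x = mt x) &
    let M := 4 / d0 * (L2norm g + (`|h0| + `|h1|) + d1 * L2norm f
                       + d2 * powR (L2norm f) (p + 1)) + 4 * L2norm f in
    H1norm mt dmt <= M /\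
    H1norm pt dpt <= 4 * (L2norm g + (`|h0| + `|h1|) + d1 * M
                          + d2 * powR M (p + 1))].
Proof.
have [a [Pa ha]] := exists_a.
pose m := fun y => a + F y.
pose dp := fun y => g y - d (a + F y).
pose pt := fun x => h0 + \int[mu]_(y in `[0, x]%classic) dp y.
have hdm2 : inL2 (fun y => d (a + F y)) := dbF_L2 a.
have [hdp Ldp] := L2_sub hg hdm2.
have e01 : (`[0, 1]%classic : set R) = I01 (R:=R) by [].
exists pt, dp, m, f; split.
- split; [|split; [|split; [|split; [|split]]]].
  + by split => // x hx; rewrite /pt pint0 addr0.
  + by split => // x hx; rewrite /m F0 addr0.
  + exact: aeW.
  + by apply: aeW => x _; rewrite /dp subrK.
  + by rewrite /pt pint0 addr0.
  + rewrite /pt e01 /dp (RintegralB mI01L (L2_integrable hg) (dbF_int a)).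
    move: Pa; rewrite /Phi /T => ->; lra.
- move=> pt' dpt' mt' dmt' [[hdp' ep'] [[hdm' em'] [aem [aep [p0' p1']]]]] x hx.
  set b := mt' 0.
  have hm' : forall y, 0 <= y <= 1 -> mt' y = b + F y.
    move=> y hy; rewrite (em' y hy) /F; congr (_ + _).
    exact: ae_int (L2_integrable hdm') (L2_integrable hf) aem hy.
  have ibF := intB (L2_integrable hg) (dbF_int b).
  have hp' : forall y, 0 <= y <= 1 ->
      pt' y = h0 + \int[mu]_(z in `[0, y]%classic) (g z - d (b + F z)).
    move=> y hy; rewrite (ep' y hy) p0'; congr (_ + _).
    apply: ae_int (L2_integrable hdp') ibF _ hy.
    have HF := @ae_filter_ringOfSetsType _ _ _ mu.
    apply: (@filterS _ _ HF _ _ _ aep) => z H hz.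
    have hz' : 0 <= z <= 1 by case/andP: hz => z1 z2; rewrite !ltW.
    by rewrite -(hm' z hz') -(H hz) addrK.
  have Pb : Phi b = T.
    have h11 : 0 <= (1:R) <= 1 by rewrite ler01 lexx.
    have := hp' 1 h11; rewrite p1' e01 (RintegralB mI01L (L2_integrable hg) (dbF_int b)).
    rewrite /T /Phi.
    set I1 := \int[mu]_(y in I01 (R:=R)) g y.
    set I2 := \int[mu]_(y in I01 (R:=R)) d (b + F y).
    clearbody I1 I2 => E; lra.
  have ba : b = a.
    apply/eqP; rewrite eq_le; apply/andP; split.
    + rewrite leNgt; apply/negP => ab.
      have := Phi_mono (ltW ab); rewrite Pa Pb subrr => H.
      have hba := ab; rewrite -subr_gt0 in hba.
      by have := lt_le_trans (mulr_gt0 d0_pos hba) H; rewrite ltxx.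
    + rewrite leNgt; apply/negP => ab.
      have := Phi_mono (ltW ab); rewrite Pa Pb subrr => H.
      have hba := ab; rewrite -subr_gt0 in hba.
      by have := lt_le_trans (mulr_gt0 d0_pos hba) H; rewrite ltxx.
  split.
  + by rewrite hp' // /pt ba.
  + by rewrite hm' // ba.
- move=> M.
  have A0' : 0 <= A / d0 by rewrite divr_ge0// ltW.
  have hM : M = 4 * (A / d0) + 4 * Lf.
    by rewrite /M /A /Lf /Lg; rewrite mulrAC [in RHS]mulrA.
  have S0 : 0 <= `|a| + Lf by rewrite addr_ge0.
  have hmb : forall y, I01 (R:=R) y -> `|m y| <= `|a| + Lf.
    by move=> y Iy; apply: le_trans (ler_normD _ _) _; rewrite lerD2l FLf.
  have mm : measurable_fun (I01 (R:=R)) m.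
    exact: measurable_funD (measurable_cst a) Fmeas.
  have [_ Lm] := L2_bdd mm S0 hmb.
  have SM : `|a| + Lf <= M by rewrite hM; lra.
  have M0 : 0 <= M by lra.
  set B := d1 * M + d2 * powR M (p + 1).
  have B0 : 0 <= B by rewrite /B addr_ge0// mulr_ge0// ?powR_ge0.
  have hdb : forall y, I01 (R:=R) y -> `|d (a + F y)| <= B.
    move=> y Iy; apply: le_trans (dbF_bdd a Iy) _.
    rewrite /Cb /B -powR_p1// mulrA -mulrDl.
    apply: le_trans (_ : (d1 + d2 * powR M p) * (`|a| + Lf) <= _).
      apply: ler_wpM2r => //; rewrite lerD2l; apply: ler_wpM2l => //.
      by apply: ge0_ler_powR; rewrite ?nnegrE.
    by apply: ler_wpM2l => //; rewrite addr_ge0// mulr_ge0// powR_ge0.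
  have [_ LdmB] := L2_bdd (dbF_meas a) B0 hdb.
  have hptb : forall y, I01 (R:=R) y -> `|pt y| <= `|h0| + L2norm dp.
    move=> y Iy; apply: le_trans (ler_normD _ _) _; rewrite lerD2l.
    exact: bound_int.
  have mpt : measurable_fun (I01 (R:=R)) pt.
    exact: measurable_funD (measurable_cst h0) (pint_meas (L2_integrable hdp)).
  have P0' : 0 <= `|h0| + L2norm dp by rewrite addr_ge0// L2norm_ge0.
  have [_ Lpt] := L2_bdd mpt P0' hptb.
  have H1m := H1_le m f.
  have H1p := H1_le pt dp.
  split.
  + rewrite -/Lf in H1m; lra.
  + rewrite -addrA -/B -/Lg.
    have Ldp' : L2norm dp <= 2 * (Lg + L2norm (fun y => d (a + F y))) := Ldp.
    have LdmB' : L2norm (fun y => d (a + F y)) <= B := LdmB.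
    have := normr_ge0 h1; have := normr_ge0 h0; have := Lg0.
    move: Ldp' LdmB' Lpt H1p.
    set X := L2norm (fun y => d (a + F y)).
    set Y := L2norm dp. set Z := L2norm pt. set W := H1norm pt dp.
    clearbody X Y Z W B. move=> *. lra.
Qed.

End Main.

Theorem lemma1 (R : realType) :
  exists c : R, 0 < c /\
  forall (d : R -> R) (d0 d1 d2 p : R),
    0 < d0 -> 0 <= d1 -> 0 <= d2 -> 0 <= p ->
    (forall x, derivable d x 1) -> continuous (derive1 d) ->
    d 0 = 0 ->
    (forall y, d0 < derive1 d y) ->
    (forall y, `|derive1 d y| <= d1 + d2 * powR `|y| p) ->
  forall (f g : R -> R) (h0 h1 : R),
    inL2 f -> inL2 g ->
    exists (pt dpt mt dmt : R -> R),
      [/\ solves d f g h0 h1 pt dpt mt dmt,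
        (forall pt' dpt' mt' dmt', solves d f g h0 h1 pt' dpt' mt' dmt' ->
           forall x, 0 <= x <= 1 -> pt' x = pt x /\ mt' x = mt x) &
        let M := c / d0 * (L2norm g + (`|h0| + `|h1|) + d1 * L2norm f
                           + d2 * powR (L2norm f) (p + 1)) + c * L2norm f in
        H1norm mt dmt <= M /\
        H1norm pt dpt <= c * (L2norm g + (`|h0| + `|h1|) + d1 * M
                              + d2 * powR M (p + 1))].
Proof.
exists 4; split; first by [].
move=> d d0 d1 d2 p d0p d1p d2p pp dd _ d_0 dlow dup f g h0 h1 hf hg.
exact: main_sol.
Qed.
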